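(* Let $G$ be a modular noetherian right $\ell$-group with strong order unit $s$ and degree homomorphism $\deg$. Let $g \in G^-$. Let $g = g_k g_{k-1}\cdots g_1$ be its right-normal factorization and $g = h_1 \cdots h_{k-1} h_k$ its left-normal factorization. Then $\deg(h_i) = \deg(g_i)$ for all $1 \leq i \leq k$.
   Context: A right $\ell$-group is a group $G$ (identity $e$) with a right-invariant partial order making $G$ a lattice. It is modular if the lattice is modular. It is noetherian if for each $g$ the set $\{h \geq g\}$ satisfies the descending chain condition and the set $\{h \leq g\}$ satisfies the ascending chain condition. $G^- = \{g \leq e\}$ and $[a,b] = \{x : a \leq x \leq b\}$. A strong order unit is an element $s > e$ such that $x \mapsto sx$ is a lattice automorphism and every $g$ satisfies $g \leq s^k$ for some $k \in \mathbb{Z}$. $\deg : G \to \mathbb{Z}$ is the unique group homomorphism sending $g \in G^-$ to the common length of its factorizations into elements covered by $e$. A right-normal factorization of $g \in G^-$ is a sequence $g_1,\dots,g_k \in [s^{-1},e] \setminus \{e\}$ with $g = g_k\cdots g_1$ such that, for each $1 \leq i < k$, there are no $h,h' \in G^-$ with $h \neq e$, $h'h = g_{i+1}$, $hg_i \in [s^{-1},e]$. A left-normal factorization of $g$ is a sequence $h_1,\dots,h_k \in [s^{-1},e]\setminus\{e\}$ with $g = h_1\cdots h_k$ such that, for each $1 \leq i < k$, there are no $h,h' \in G^-$ with $h \neq e$, $hh' = h_{i+1}$, $h_i h \in [s^{-1},e]$. Each $g \in G^-$ has a unique right-normal and a unique left-normal factorization, and both have the same number of factors. *)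

(* Defs.v *)
From Stdlib Require Import ZArith List.
Import ListNotations.
Set Implicit Arguments.

Record rlgroup := RLGroup {
  carrier :> Type;
  mul : carrier -> carrier -> carrier;
  inv : carrier -> carrier;
  one : carrier;
  le : carrier -> carrier -> Prop;
  meet : carrier -> carrier -> carrier;
  join : carrier -> carrier -> carrier;
  mulA : forall x y z, mul x (mul y z) = mul (mul x y) z;
  mul1g : forall x, mul one x = x;
  mulg1 : forall x, mul x one = x;
  mulVg : forall x, mul (inv x) x = one;
  mulgV : forall x, mul x (inv x) = one;
  le_refl : forall x, le x x;
  le_antisym : forall x y, le x y -> le y x -> x = y;
  le_trans : forall x y z, le x y -> le y z -> le x z;
  meet_l : forall x y, le (meet x y) x;
  meet_r : forall x y, le (meet x y) y;
  meet_glb : forall x y z, le z x -> le z y -> le z (meet x y);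
  join_l : forall x y, le x (join x y);
  join_r : forall x y, le y (join x y);
  join_lub : forall x y z, le x z -> le y z -> le (join x y) z;
  le_mulr : forall x y z, le x y -> le (mul x z) (mul y z)
}.

Section Defs.
Variable G : rlgroup.

Notation "x * y" := (mul G x y).
Notation e := (one G).
Notation "x <= y" := (le G x y).

Definition modular : Prop :=
  forall x y z : G, x <= z -> join G x (meet G y z) = meet G (join G x y) z.

Definition noetherian : Prop :=
  forall g : G,
    (forall f : nat -> G, (forall n, g <= f n) -> (forall n, f (S n) <= f n) ->
       exists N, forall n, (N <= n)%nat -> f n = f N) /\
    (forall f : nat -> G, (forall n, f n <= g) -> (forall n, f n <= f (S n)) ->
       exists N, forall n, (N <= n)%nat -> f n = f N).

Definition zpow (x : G) (k : Z) : G :=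
  match k with
  | Z0 => e
  | Zpos p => Pos.iter (fun y => x * y) e p
  | Zneg p => inv G (Pos.iter (fun y => x * y) e p)
  end.

Definition strong_order_unit (s : G) : Prop :=
  (e <= s /\ s <> e) /\
  (forall x y : G, s * meet G x y = meet G (s * x) (s * y)) /\
  (forall x y : G, s * join G x y = join G (s * x) (s * y)) /\
  (forall g : G, exists k : Z, g <= zpow s k).

Definition negcone (g : G) : Prop := g <= e.

Definition covered_by_e (a : G) : Prop :=
  a <= e /\ a <> e /\ forall x : G, a <= x -> x <= e -> x = a \/ x = e.

Definition lprod (l : list G) : G := fold_right (fun a b => a * b) e l.

Definition is_degree (deg : G -> Z) : Prop :=
  (forall x y : G, deg (x * y) = (deg x + deg y)%Z) /\
  (forall l : list G, Forall covered_by_e l ->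
     deg (lprod l) = Z.of_nat (length l)).

Definition in_unit_interval (s x : G) : Prop := inv G s <= x /\ x <= e.

(** Right-normal factorization: gs = [g_1; ...; g_k], g = g_k * ... * g_1. *)
Definition right_normal (s g : G) (gs : list G) : Prop :=
  Forall (fun a => in_unit_interval s a /\ a <> e) gs /\
  g = lprod (rev gs) /\
  forall i : nat, (S i < length gs)%nat ->
    ~ exists h h' : G, negcone h /\ negcone h' /\ h <> e /\
        h' * h = nth (S i) gs e /\ in_unit_interval s (h * nth i gs e).

(** Left-normal factorization: hs = [h_1; ...; h_k], g = h_1 * ... * h_k. *)
Definition left_normal (s g : G) (hs : list G) : Prop :=
  Forall (fun a => in_unit_interval s a /\ a <> e) hs /\
  g = lprod hs /\
  forall i : nat, (S i < length hs)%nat ->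
    ~ exists h h' : G, negcone h /\ negcone h' /\ h <> e /\
        h * h' = nth (S i) hs e /\ in_unit_interval s (nth i hs e * h).

End Defs.
Arguments strong_order_unit {G} s.
Arguments negcone {G} g.
Arguments right_normal {G} s g gs.
Arguments left_normal {G} s g hs.
Arguments is_degree {G} deg.

(* Main.v *)
Require Import Defs.
From Stdlib Require Import ZArith List Lia Classical ClassicalEpsilon.
Import ListNotations.

Definition dualG (G : rlgroup) : rlgroup :=
  @RLGroup (carrier G) (mul G) (inv G) (one G) (fun x y => le G y x) (join G) (meet G)
    (mulA G) (mul1g G) (mulg1 G) (mulVg G) (mulgV G) (le_refl G)
    (fun x y a b => le_antisym G x y b a)
    (fun x y z a b => le_trans G z y x b a)
    (join_l G) (join_r G) (join_lub G) (meet_l G) (meet_r G) (meet_glb G)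
    (fun x y z h => le_mulr G y x z h).


Arguments mulA {r} x y z. Arguments mul1g {r} x. Arguments mulg1 {r} x.
Arguments mulVg {r} x. Arguments mulgV {r} x. Arguments le_refl {r} x.
Arguments le_antisym {r} x y _ _. Arguments le_trans {r} x y z _ _.
Arguments meet_l {r} x y. Arguments meet_r {r} x y. Arguments meet_glb {r} x y z _ _.
Arguments join_l {r} x y. Arguments join_r {r} x y. Arguments join_lub {r} x y z _ _.
Arguments le_mulr {r} x y z _.

Section NP.
Variable G : rlgroup.
Fixpoint npow (x : G) (n : nat) : G :=
  match n with O => one G | S n => mul G (npow x n) x end.
End NP.

Section Basic.
Context {G : rlgroup}.
Local Infix "⋅" := (mul G) (at level 40, left associativity).
Local Notation "x ≼ y" := (le G x y) (at level 70).
Local Notation e := (one G).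
Local Notation inv := (inv G).

Lemma mulKr (x y : G) : x ⋅ y ⋅ inv y = x.
Proof. rewrite <- mulA, mulgV, mulg1. reflexivity. Qed.
Lemma mulVKr (x y : G) : x ⋅ inv y ⋅ y = x.
Proof. rewrite <- mulA, mulVg, mulg1. reflexivity. Qed.
Lemma mulKl (x y : G) : inv x ⋅ (x ⋅ y) = y.
Proof. rewrite mulA, mulVg, mul1g. reflexivity. Qed.
Lemma mulVKl (x y : G) : x ⋅ (inv x ⋅ y) = y.
Proof. rewrite mulA, mulgV, mul1g. reflexivity. Qed.

Lemma cancel_r (x y z : G) : x ⋅ z = y ⋅ z -> x = y.
Proof. intro H. rewrite <- (mulKr x z), <- (mulKr y z), H. reflexivity. Qed.
Lemma cancel_l (x y z : G) : z ⋅ x = z ⋅ y -> x = y.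
Proof. intro H. rewrite <- (mulKl z x), <- (mulKl z y), H. reflexivity. Qed.

Lemma inv_unique (x y : G) : x ⋅ y = e -> y = inv x.
Proof. intro H. apply (cancel_l _ _ x). rewrite H, mulgV. reflexivity. Qed.
Lemma inv_inv (x : G) : inv (inv x) = x.
Proof. symmetry. apply inv_unique. apply mulVg. Qed.
Lemma inv_one : inv e = e.
Proof. symmetry. apply inv_unique. apply mulg1. Qed.
Lemma inv_mul (x y : G) : inv (x ⋅ y) = inv y ⋅ inv x.
Proof. symmetry. apply inv_unique. rewrite mulA, <- (mulA x y), mulgV, mulg1, mulgV. reflexivity. Qed.
Lemma mul_comm_e (x y : G) : x ⋅ y = e -> y ⋅ x = e.
Proof. intro H. rewrite (inv_unique _ _ H). apply mulVg. Qed.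

Lemma le_mulr_rev (x y z : G) : x ⋅ z ≼ y ⋅ z -> x ≼ y.
Proof. intro H. rewrite <- (mulKr x z), <- (mulKr y z). apply le_mulr. exact H. Qed.

Lemma meet_eq (x y : G) : x ≼ y -> meet G x y = x.
Proof. intro H. apply le_antisym. apply meet_l. apply meet_glb; auto using le_refl. Qed.
Lemma join_eq (x y : G) : x ≼ y -> join G x y = y.
Proof. intro H. apply le_antisym. apply join_lub; auto using le_refl. apply join_r. Qed.
Lemma join_eq' (x y : G) : y ≼ x -> join G x y = x.
Proof. intro H. apply le_antisym. apply join_lub; auto using le_refl. apply join_l. Qed.
Lemma meet_comm (x y : G) : meet G x y = meet G y x.
Proof. apply le_antisym; apply meet_glb; auto using meet_l, meet_r. Qed.
Lemma join_comm (x y : G) : join G x y = join G y x.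
Proof. apply le_antisym; apply join_lub; auto using join_l, join_r. Qed.

Lemma join_mulr (x y z : G) : join G x y ⋅ z = join G (x ⋅ z) (y ⋅ z).
Proof.
  apply le_antisym.
  - apply (le_mulr_rev _ _ (inv z)). rewrite mulKr. apply join_lub.
    + rewrite <- (mulKr x z) at 1. apply le_mulr. apply join_l.
    + rewrite <- (mulKr y z) at 1. apply le_mulr. apply join_r.
  - apply join_lub; apply le_mulr; auto using join_l, join_r.
Qed.
Lemma meet_mulr (x y z : G) : meet G x y ⋅ z = meet G (x ⋅ z) (y ⋅ z).
Proof.
  apply le_antisym.
  - apply meet_glb; apply le_mulr; auto using meet_l, meet_r.
  - apply (le_mulr_rev _ _ (inv z)). rewrite mulKr. apply meet_glb.
    + rewrite <- (mulKr x z) at 2. apply le_mulr. apply meet_l.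
    + rewrite <- (mulKr y z) at 2. apply le_mulr. apply meet_r.
Qed.

Lemma neg_mul (a b : G) : a ≼ e -> b ≼ e -> a ⋅ b ≼ e.
Proof. intros Ha Hb. apply le_trans with (e ⋅ b). apply le_mulr; auto. rewrite mul1g; auto. Qed.
Lemma inv_le_e (z : G) : e ≼ z -> inv z ≼ e.
Proof. intro H. apply (le_mulr_rev _ _ z). rewrite mulVg, mul1g. exact H. Qed.
Lemma e_le_inv (z : G) : z ≼ e -> e ≼ inv z.
Proof. intro H. apply (le_mulr_rev _ _ z). rewrite mulVg, mul1g. exact H. Qed.

Lemma lprod_app (l1 l2 : list G) : lprod G (l1 ++ l2) = lprod G l1 ⋅ lprod G l2.
Proof. induction l1; simpl. rewrite mul1g; auto. rewrite IHl1, mulA; auto. Qed.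
Lemma lprod_rev_cons (a : G) l : lprod G (rev (a :: l)) = lprod G (rev l) ⋅ a.
Proof. simpl. rewrite lprod_app. simpl. rewrite mulg1. reflexivity. Qed.
Lemma lprod_rev_map_inv (l : list G) : lprod G (rev (map inv l)) = inv (lprod G l).
Proof.
  induction l; simpl. symmetry; apply inv_one.
  rewrite lprod_app, IHl. simpl. rewrite mulg1, inv_mul. reflexivity.
Qed.

Lemma npow_S_l (x : G) n : npow G x (S n) = x ⋅ npow G x n.
Proof. induction n; simpl in *. - rewrite mul1g, mulg1; reflexivity. - rewrite mulA, <- IHn. reflexivity. Qed.
Lemma npow_inv (x : G) n : npow G x n ⋅ npow G (inv x) n = e.
Proof.
  induction n. simpl. apply mulg1.
  rewrite (npow_S_l x n). simpl. rewrite <- mulA, (mulA (npow G x n)), IHn, mul1g. apply mulgV.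
Qed.
End Basic.

Section Unit.
Variable G : rlgroup.
Local Infix "⋅" := (mul G) (at level 40, left associativity).
Local Notation "x ≼ y" := (le G x y) (at level 70).
Local Notation e := (one G).
Local Notation inv := (inv G).
Variable s : G.
Hypothesis Hs : e ≼ s.
Hypothesis Hm : forall x y, s ⋅ meet G x y = meet G (s ⋅ x) (s ⋅ y).
Hypothesis Hj : forall x y, s ⋅ join G x y = join G (s ⋅ x) (s ⋅ y).
Local Notation d := (inv s).

Lemma ls_mono x y : x ≼ y -> s ⋅ x ≼ s ⋅ y.
Proof. intro H. rewrite <- (meet_eq _ _ H), Hm. apply meet_r. Qed.
Lemma d_meet x y : d ⋅ meet G x y = meet G (d ⋅ x) (d ⋅ y).
Proof. apply (cancel_l _ _ s). rewrite Hm, !mulVKl. reflexivity. Qed.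
Lemma d_join x y : d ⋅ join G x y = join G (d ⋅ x) (d ⋅ y).
Proof. apply (cancel_l _ _ s). rewrite Hj, !mulVKl. reflexivity. Qed.
Lemma ld_mono x y : x ≼ y -> d ⋅ x ≼ d ⋅ y.
Proof. intro H. rewrite <- (meet_eq _ _ H), d_meet. apply meet_r. Qed.
Lemma d_le_e : d ≼ e.
Proof. rewrite <- (mul1g d). rewrite <- (mulgV s) at 2. apply le_mulr. exact Hs. Qed.

Lemma dpow_join j x y : npow G d j ⋅ join G x y = join G (npow G d j ⋅ x) (npow G d j ⋅ y).
Proof.
  induction j. simpl. rewrite !mul1g. reflexivity.
  rewrite npow_S_l, <- !mulA, IHj, d_join. reflexivity.
Qed.
Lemma dpow_meet j x y : npow G d j ⋅ meet G x y = meet G (npow G d j ⋅ x) (npow G d j ⋅ y).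
Proof.
  induction j. simpl. rewrite !mul1g. reflexivity.
  rewrite npow_S_l, <- !mulA, IHj, d_meet. reflexivity.
Qed.
Lemma dpow_mono j x y : x ≼ y -> npow G d j ⋅ x ≼ npow G d j ⋅ y.
Proof. intro H. rewrite <- (join_eq _ _ H), dpow_join. apply join_l. Qed.
Lemma dpow_le_e j : npow G d j ≼ e.
Proof.
  induction j. apply le_refl. simpl. apply neg_mul; auto. apply d_le_e.
Qed.

Lemma d_le_left h a : d ≼ h ⋅ a -> a ≼ e -> d ≼ h.
Proof.
  intros H1 H2.
  apply ls_mono in H1. rewrite mulgV, mulA in H1.
  apply (le_mulr _ _ (inv a)) in H1. rewrite mulKr, mul1g in H1.
  pose proof (e_le_inv _ H2) as H3.
  pose proof (le_trans _ _ _ H3 H1) as H4.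
  apply ld_mono in H4. rewrite mulKl, mulg1 in H4. exact H4.
Qed.

Lemma le_s_inv z : d ≼ z -> inv z ≼ s.
Proof.
  intro H. apply ls_mono in H. rewrite mulgV in H.
  apply (le_mulr _ _ (inv z)) in H. rewrite mul1g, mulKr in H. exact H.
Qed.
Lemma le_inv_s z : z ≼ s -> d ≼ inv z.
Proof.
  intro H. apply ld_mono in H. rewrite mulVg in H.
  apply (le_mulr _ _ (inv z)) in H. rewrite mul1g, mulKr in H. exact H.
Qed.

Lemma garside_step x j : x ≼ e ->
  join G x (npow G d (S j)) = join G (x ⋅ inv (join G x d)) (npow G d j) ⋅ join G x d.
Proof.
  intro Hx. set (r := join G x d).
  set (y := x ⋅ inv r). set (c := d ⋅ inv r).
  assert (Hyr : y ⋅ r = x) by (unfold y; apply mulVKr).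
  assert (Hyc : join G y c = e).
  { apply (cancel_r _ _ r). rewrite join_mulr, Hyr. unfold c. rewrite mulVKr, mul1g. reflexivity. }
  rewrite join_mulr, Hyr.
  apply le_antisym.
  - apply join_lub. apply join_l.
    apply le_trans with (npow G d j ⋅ r). simpl. apply dpow_mono. apply join_r.
    apply join_r.
  - apply join_lub. apply join_l.
    apply (le_mulr_rev _ _ (inv r)). rewrite mulKr, join_mulr. fold y.
    simpl. rewrite <- mulA. fold c.
    rewrite <- (mulg1 (npow G d j)) at 1. rewrite <- Hyc, dpow_join.
    apply join_lub. 2: apply join_r.
    apply le_trans with y. 2: apply join_l.
    rewrite <- (mul1g y) at 2. apply le_mulr. apply dpow_le_e.
Qed.

Definition simple (a : G) := d ≼ a /\ a ≼ e /\ a <> e.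
Definition loc (a b : G) := ~ exists h h', h ≼ e /\ h' ≼ e /\ h <> e /\ h' ⋅ h = b /\
   (d ≼ h ⋅ a /\ h ⋅ a ≼ e).
Inductive RN : list G -> Prop :=
 | RN0 : RN []
 | RN1 a : simple a -> RN [a]
 | RN2 a b l : simple a -> loc a b -> RN (b :: l) -> RN (a :: b :: l).

Lemma RN_tail a l : RN (a :: l) -> RN l.
Proof. intro H. inversion H; subst; auto. constructor. Qed.

Lemma RN_neg l : RN l -> lprod G (rev l) ≼ e.
Proof.
  induction 1. apply le_refl. simpl. rewrite ?mul1g, ?mulg1. apply H.
  rewrite lprod_rev_cons. apply neg_mul; auto. apply H.
Qed.

Lemma head_lemma l : forall a, RN (a :: l) -> join G (lprod G (rev (a :: l))) d = a.
Proof.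
  induction l as [|b l IH]; intros a H.
  - simpl. rewrite ?mul1g, ?mulg1. apply join_eq'. inversion H; subst. apply H1.
  - inversion H as [| |a0 b0 l0 Ha Hloc Hb]; subst.
    specialize (IH b Hb).
    rewrite lprod_rev_cons.
    set (y := lprod G (rev (b :: l))) in *.
    pose proof (RN_neg _ Hb) as Hy. fold y in Hy.
    set (m := join G (y ⋅ a) d).
    assert (Hma : m ≼ a).
    { apply join_lub. rewrite <- (mul1g a) at 2. apply le_mulr; auto. apply Ha. }
    set (h := m ⋅ inv a).
    assert (Hha : h ⋅ a = m) by apply mulVKr.
    assert (Hhe : h ≼ e).
    { apply (le_mulr_rev _ _ a). rewrite Hha, mul1g. exact Hma. }
    assert (Hdm : d ≼ m) by apply join_r.
    assert (Hdh : d ≼ h). { apply (d_le_left _ a). rewrite Hha; auto. apply Ha. }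
    assert (Hyh : y ≼ h). { apply (le_mulr_rev _ _ a). rewrite Hha. apply join_l. }
    assert (Hbh : b ≼ h). { rewrite <- IH. apply join_lub; auto. }
    destruct (classic (h = e)) as [He|Hne].
    + fold m. rewrite <- Hha, He, mul1g. reflexivity.
    + exfalso. apply Hloc. exists h, (b ⋅ inv h). repeat split; auto.
      * apply (le_mulr_rev _ _ h). rewrite mulVKr, mul1g. auto.
      * apply mulVKr.
      * rewrite Hha. auto.
      * rewrite Hha. apply le_trans with a; auto. apply Ha.
Qed.

Lemma RN_join l : RN l -> forall j, join G (lprod G (rev l)) (npow G d j) = lprod G (rev (firstn j l)).
Proof.
  induction l as [|a l IH]; intros H j.
  - rewrite firstn_nil. simpl. apply join_eq'. apply dpow_le_e.
  - destruct j as [|j].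
    + simpl. apply join_eq. apply (RN_neg _ H).
    + rewrite garside_step by apply (RN_neg _ H).
      rewrite head_lemma by exact H.
      rewrite lprod_rev_cons, mulKr, IH by apply (RN_tail _ _ H).
      simpl firstn. rewrite lprod_rev_cons. reflexivity.
Qed.

Lemma RN_of l : (forall a, In a l -> simple a) ->
  (forall i, S i < length l -> loc (nth i l e) (nth (S i) l e)) -> RN l.
Proof.
  induction l as [|a l IH]; intros H1 H2. constructor.
  destruct l as [|b l]. constructor. apply H1; simpl; auto.
  constructor. apply H1; simpl; auto.
  apply (H2 0). simpl. lia.
  apply IH. intros; apply H1; simpl in *; auto.
  intros i Hi. apply (H2 (S i)). simpl in *. lia.
Qed.
End Unit.

Lemma extremal (T : Type) (r : T -> T -> Prop) (B : T -> Prop) :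
  (forall f : nat -> T, (forall n, B (f n)) -> (forall n, r (f (S n)) (f n)) ->
     exists N, forall n, (N <= n)%nat -> f n = f N) ->
  forall P : T -> Prop, (forall v, P v -> B v) -> forall v0, P v0 ->
  exists m, P m /\ forall v, P v -> r v m -> v = m.
Proof.
  intros Hc P HB v0 Hv0. apply NNPP; intro Hno.
  assert (Hstep : forall m : {v | P v}, {v' : {v | P v} |
            r (proj1_sig v') (proj1_sig m) /\ proj1_sig v' <> proj1_sig m}).
  { intros [m Hm]. apply constructive_indefinite_description.
    apply NNPP; intro H2. apply Hno. exists m; split; auto.
    intros v Hv Hr. apply NNPP; intro Hne. apply H2.
    exists (exist _ v Hv). simpl. auto. }
  set (it := fix it (n : nat) : {v | P v} :=
          match n with O => exist _ v0 Hv0 | S n => proj1_sig (Hstep (it n)) end).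
  destruct (Hc (fun n => proj1_sig (it n))) as [N HN].
  - intro n. apply HB. apply proj2_sig.
  - intro n. simpl. apply (proj2_sig (Hstep (it n))).
  - specialize (HN (S N)). simpl in HN. apply (proj2 (proj2_sig (Hstep (it N)))).
    apply HN. lia.
Qed.

Section Val.
Context {G : rlgroup}.
Local Infix "⋅" := (mul G) (at level 40, left associativity).
Local Notation "x ≼ y" := (le G x y) (at level 70).
Local Notation e := (one G).
Local Notation inv := (inv G).
Variable deg : G -> Z.
Hypothesis Hmod : modular G.
Hypothesis Hnoeth : noetherian G.
Hypothesis Hdeg : is_degree deg.

Lemma deg_one : deg e = 0%Z.
Proof. pose proof (proj1 Hdeg e e) as H. rewrite mulg1 in H. lia. Qed.
Lemma deg_inv x : deg (inv x) = (- deg x)%Z.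
Proof. pose proof (proj1 Hdeg x (inv x)) as H. rewrite mulgV, deg_one in H. lia. Qed.
Lemma deg_mul x y : deg (x ⋅ y) = (deg x + deg y)%Z.
Proof. apply (proj1 Hdeg). Qed.

Definition cover (a b : G) := a ≼ b /\ a <> b /\ forall v, a ≼ v -> v ≼ b -> v = a \/ v = b.

Lemma deg_cover a b : cover a b -> deg a = (deg b + 1)%Z.
Proof.
  intros [H1 [H2 H3]].
  assert (Hc : covered_by_e G (a ⋅ inv b)).
  { split; [|split].
    - rewrite <- (mulgV b). apply le_mulr; auto.
    - intro H. apply H2. apply (cancel_r _ _ (inv b)). rewrite H, mulgV. reflexivity.
    - intros x Hx1 Hx2.
      destruct (H3 (x ⋅ b)) as [E|E].
      + rewrite <- (mulVKr a b). apply le_mulr. auto.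
      + rewrite <- (mul1g b) at 2. apply le_mulr; auto.
      + left. rewrite <- E, mulKr. reflexivity.
      + right. rewrite <- (mul1g b) in E at 2. apply (cancel_r _ _ _ E). }
  pose proof (proj2 Hdeg [a ⋅ inv b] (Forall_cons _ Hc (Forall_nil _))) as H.
  simpl in H. rewrite mulg1, deg_mul, deg_inv in H. lia.
Qed.

Lemma cover_transport x y t m : meet G x y ≼ t -> m ≼ x -> cover t m ->
  cover (join G t y) (join G m y).
Proof.
  intros Ht Hm [C1 [C2 C3]].
  assert (Htx : t ≼ x) by (apply le_trans with m; auto).
  assert (K1 : forall u, meet G x y ≼ u -> u ≼ x -> meet G (join G u y) x = u).
  { intros u Hu1 Hu2. rewrite <- (Hmod u y x Hu2). apply join_eq'.
    rewrite meet_comm. auto. }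
  assert (K2 : forall v, y ≼ v -> v ≼ join G x y -> join G (meet G v x) y = v).
  { intros v Hv1 Hv2. rewrite join_comm, meet_comm, (Hmod y x v Hv1), join_comm.
    rewrite meet_comm. apply meet_eq. auto. }
  split; [|split].
  - apply join_lub. apply le_trans with m; auto. apply join_l. apply join_r.
  - intro E. apply C2. rewrite <- (K1 t), <- (K1 m), E; auto.
    apply le_trans with t; auto.
  - intros v Hv1 Hv2.
    assert (Hy : y ≼ v) by (apply le_trans with (join G t y); auto; apply join_r).
    assert (Hvx : v ≼ join G x y).
    { apply le_trans with (join G m y); auto. apply join_lub.
      apply le_trans with x; auto; apply join_l. apply join_r. }
    destruct (C3 (meet G v x)) as [E|E].
    + rewrite <- (K1 t) by auto. apply meet_glb. apply le_trans with (join G t y); auto. apply meet_l.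
      apply meet_r.
    + rewrite <- (K1 m) by (auto; apply le_trans with t; auto). apply meet_glb.
      apply le_trans with v; auto. apply meet_l. apply meet_r.
    + left. rewrite <- (K2 v), E; auto.
    + right. rewrite <- (K2 v), E; auto.
Qed.

Lemma valuation x y : (deg (meet G x y) + deg (join G x y) = deg x + deg y)%Z.
Proof.
  set (Q := fun t => (deg t - deg x = deg (join G t y) - deg (join G x y))%Z).
  assert (HQ : forall t, t ≼ x -> meet G x y ≼ t -> Q t).
  { intros t0 Ht0 Ht0'. apply NNPP; intro Hn.
    destruct (extremal G (fun v m => m ≼ v) (fun v => v ≼ x) (proj2 (Hnoeth x))
       (fun t => t ≼ x /\ meet G x y ≼ t /\ ~ Q t) (fun v H => proj1 H) t0
       (conj Ht0 (conj Ht0' Hn))) as [m0 [[Hm1 [Hm2 Hm3]] Hmax]].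
    destruct (classic (m0 = x)) as [Ex|Nx].
    { apply Hm3. unfold Q. rewrite Ex. lia. }
    destruct (extremal G (fun v m => v ≼ m) (fun v => m0 ≼ v) (proj1 (Hnoeth m0))
       (fun v => m0 ≼ v /\ v ≼ x /\ v <> m0) (fun v H => proj1 H) x
       (conj Hm1 (conj (le_refl x) (fun E => Nx (eq_sym E))))) as [c [[Hc1 [Hc2 Hc3]] Hmin]].
    assert (Hcov : cover m0 c).
    { split; [|split]; auto. intros v Hv1 Hv2.
      destruct (classic (v = m0)) as [E|E]; auto. right.
      apply Hmin; auto. split; auto. split; auto. apply le_trans with c; auto. }
    assert (HQc : Q c).
    { apply NNPP; intro Hnc. apply Hc3. apply Hmax; auto. split; auto. split; auto.
      apply le_trans with m0; auto. }
    apply Hm3. unfold Q in *.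
    pose proof (deg_cover _ _ Hcov).
    pose proof (deg_cover _ _ (cover_transport x y m0 c Hm2 Hc2 Hcov)).
    lia. }
  specialize (HQ (meet G x y) (meet_l x y) (le_refl _)). unfold Q in HQ.
  rewrite (join_eq (meet G x y) y (meet_r x y)) in HQ.
  lia.
Qed.
End Val.

Section Fin.
Context {G : rlgroup}.
Local Infix "⋅" := (mul G) (at level 40, left associativity).
Local Notation "x ≼ y" := (le G x y) (at level 70).
Local Notation e := (one G).
Local Notation inv := (inv G).
Variable deg : G -> Z.
Hypothesis Hmod : modular G.
Hypothesis Hnoeth : noetherian G.
Hypothesis Hdeg : is_degree deg.

Definition dsum (l : list G) : Z := fold_right (fun a acc => (deg a + acc)%Z) 0%Z l.

Lemma dsum_app l1 l2 : dsum (l1 ++ l2) = (dsum l1 + dsum l2)%Z.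
Proof. induction l1; simpl; lia. Qed.
Lemma dsum_rev l : dsum (rev l) = dsum l.
Proof. induction l; simpl; auto. rewrite dsum_app. simpl. lia. Qed.
Lemma deg_lprod l : deg (lprod G l) = dsum l.
Proof. induction l; simpl. apply (deg_one deg Hdeg). rewrite (deg_mul deg Hdeg), IHl. reflexivity. Qed.

Lemma prefix_nth (l1 l2 : list G) : length l1 = length l2 ->
  (forall j, dsum (firstn j l1) = dsum (firstn j l2)) ->
  forall i, deg (nth i l1 e) = deg (nth i l2 e).
Proof.
  revert l2. induction l1 as [|a l1 IH]; intros [|b l2] Hl Hs i; simpl in *; try discriminate; auto.
  assert (Hab : deg a = deg b) by (specialize (Hs 1%nat); simpl in Hs; lia).
  destruct i; auto. apply IH. lia.
  intro j. specialize (Hs (S j)). simpl in Hs. lia.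
Qed.

Variable s : G.
Hypothesis Hs : e ≼ s.
Hypothesis Hm : forall x y, s ⋅ meet G x y = meet G (s ⋅ x) (s ⋅ y).
Hypothesis Hj : forall x y, s ⋅ join G x y = join G (s ⋅ x) (s ⋅ y).

Lemma deg_key g j : deg (join G g (npow G (inv s) j)) = (- deg (meet G (inv g) (npow G s j)))%Z.
Proof.
  set (D := npow G (inv s) j). set (S' := npow G s j).
  assert (HSD : S' ⋅ D = e) by apply npow_inv.
  assert (HDS : D ⋅ S' = e) by (apply mul_comm_e; auto).
  set (z := D ⋅ inv g). set (w := inv g ⋅ D).
  assert (E1 : join G g D ⋅ inv g = join G e z).
  { rewrite join_mulr, mulgV. reflexivity. }
  assert (E2 : meet G (inv g) S' ⋅ D = meet G w e).
  { rewrite meet_mulr, HSD. reflexivity. }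
  assert (E3 : meet G e z = D ⋅ meet G w e ⋅ S').
  { unfold D. rewrite (dpow_meet G s Hm), meet_mulr. fold D.
    rewrite mulg1, HDS. unfold w. rewrite !mulA, <- (mulA _ D S'), HDS, mulg1.
    rewrite meet_comm. reflexivity. }
  pose proof (valuation deg Hmod Hnoeth Hdeg e z) as V.

  assert (A1 := f_equal deg E1). assert (A2 := f_equal deg E2). assert (A3 := f_equal deg E3).
  assert (A4 := f_equal deg HDS).
  rewrite !(deg_mul deg Hdeg) in A1, A2, A3, A4.
  rewrite (deg_inv deg Hdeg) in A1.
  unfold z in V. rewrite (deg_mul deg Hdeg), (deg_inv deg Hdeg), (deg_one deg Hdeg) in V.
  rewrite (deg_one deg Hdeg) in A4.
  rewrite (deg_mul deg Hdeg) in A3. fold z in V. lia.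
Qed.
End Fin.

Lemma nth_map_inv (G : rlgroup) (l : list G) i :
  nth i (map (inv G) l) (one G) = inv G (nth i l (one G)).
Proof. rewrite <- inv_one at 1. apply map_nth. Qed.

Theorem mainTheorem6 (G : rlgroup) (s : G) (deg : G -> Z) (g : G)
  (k : nat) (gs hs : list G) :
  modular G -> noetherian G -> strong_order_unit s -> is_degree deg ->
  negcone g ->
  right_normal s g gs -> left_normal s g hs ->
  length gs = k -> length hs = k ->
  forall i : nat, (i < k)%nat -> deg (nth i hs (one G)) = deg (nth i gs (one G)).
Proof.
  intros Hmod Hnoeth Hsou Hdeg Hg Hrn Hln Hk1 Hk2 i Hi.
  destruct Hsou as [[Hs _] [Hm [Hj _]]].
  destruct Hrn as [Hrn1 [Hrn2 Hrn3]]. destruct Hln as [Hln1 [Hln2 Hln3]].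
  assert (RNg : RN G s gs).
  { apply RN_of.
    - intros a Ha. rewrite Forall_forall in Hrn1. destruct (Hrn1 a Ha) as [[H1 H2] H3].
      unfold simple. auto.
    - intros i0 Hi0. exact (Hrn3 i0 Hi0). }
  assert (Hgs : forall j, join G g (npow G (inv G s) j) = lprod G (rev (firstn j gs))).
  { intro j. rewrite Hrn2. apply RN_join; auto. }
  assert (Hs' : le (dualG G) (one G) (inv G s)) by exact (d_le_e G s Hs).
  assert (Hm' : forall x y, mul (dualG G) (inv G s) (meet (dualG G) x y) =
      meet (dualG G) (mul (dualG G) (inv G s) x) (mul (dualG G) (inv G s) y))
    by exact (d_join G s Hj).
  assert (Hj' : forall x y, mul (dualG G) (inv G s) (join (dualG G) x y) =
      join (dualG G) (mul (dualG G) (inv G s) x) (mul (dualG G) (inv G s) y))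
    by exact (d_meet G s Hm).
  assert (RNh : RN (dualG G) (inv G s) (map (inv G) hs)).
  { apply RN_of.
    - intros a Ha. apply in_map_iff in Ha. destruct Ha as [h [Eh Hh]]. subst a.
      rewrite Forall_forall in Hln1. destruct (Hln1 h Hh) as [[H1 H2] H3].
      unfold simple. simpl. split; [|split].
      + rewrite inv_inv. apply le_s_inv; auto.
      + apply e_le_inv; auto.
      + intro E. apply H3. rewrite <- (inv_inv h). simpl in E. rewrite E. apply inv_one.
    - intros i0 Hi0. rewrite length_map in Hi0.
      unfold loc. simpl. rewrite !nth_map_inv.
      intros [u [u' [U1 [U2 [U3 [U4 [U5 U6]]]]]]].
      apply (Hln3 i0 Hi0). exists (inv G u), (inv G u').
      unfold negcone. split; [|split; [|split; [|split]]].
      + apply inv_le_e; auto.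
      + apply inv_le_e; auto.
      + intro E. apply U3. rewrite <- (inv_inv u), E. apply inv_one.
      + rewrite <- inv_mul, U4. apply inv_inv.
      + rewrite <- (inv_inv (nth i0 hs (one G))) at 1. rewrite <- inv_mul.
        rewrite inv_inv in U5. split.
        * apply le_inv_s; auto.
        * apply inv_le_e; auto. }
  assert (Hhs : forall j, meet G (inv G g) (npow G s j) = inv G (lprod G (firstn j hs))).
  { intro j. pose proof (RN_join (dualG G) (inv G s) Hs' Hm' Hj' _ RNh j) as H.
    assert (X1 : npow (dualG G) (Defs.inv (dualG G) (inv G s)) j = npow G (inv G (inv G s)) j) by reflexivity.
    assert (X2 : lprod (dualG G) (rev (map (inv G) hs)) = lprod G (rev (map (inv G) hs))) by reflexivity.
    change (meet G (lprod G (rev (map (inv G) hs))) (npow G (inv G (inv G s)) j)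
            = lprod G (rev (firstn j (map (inv G) hs)))) in H.
    rewrite inv_inv, firstn_map, !lprod_rev_map_inv, <- Hln2 in H. exact H. }
  symmetry. apply (prefix_nth deg). lia.
  intro j. rewrite <- (dsum_rev deg (firstn j gs)), <- !(deg_lprod deg Hdeg), <- Hgs.
  rewrite (deg_key deg Hmod Hnoeth Hdeg s Hm), Hhs, (deg_inv deg Hdeg). lia.
Qed.
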